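(* If $L$ is the random walk Laplacian of a connected graph $G$ with $n_0$ vertices and eigenvalues $\lambda_1\le\lambda_2\le\dots\le\lambda_{n_0}$, then $\|L\|_{2,s}\ge\lambda_{s-1}$.
   Context: $L=I-D^{-1}A$ with $A$ the adjacency matrix and $D$ the degree matrix. For a matrix $\Phi$, $\|\Phi\|_{2,s}:=\max_{S\subset[n_0],\,|S|=s}\|\Phi_S\|_{2}$, where $\Phi_S$ is the column submatrix indexed by $S$ and $\|\cdot\|_2$ is the spectral (operator) norm. *)

(* Defs.v *)
From HB Require Import structures.
From mathcomp Require Import all_boot all_order all_algebra.
From mathcomp Require Import boolp classical_sets reals.
Set Implicit Arguments. Unset Strict Implicit. Unset Printing Implicit Defensive.
Import Order.TTheory GRing.Theory Num.Theory.
Local Open Scope ring_scope.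
Local Open Scope classical_set_scope.

Definition simple_graph (n : nat) (e : rel 'I_n) : Prop :=
  symmetric e /\ irreflexive e.

Definition connected_graph (n : nat) (e : rel 'I_n) : Prop :=
  forall i j : 'I_n, connect e i j.

Definition deg (n : nat) (e : rel 'I_n) (i : 'I_n) : nat := #|[set j | e i j]|.

Definition adjmx (R : realType) (n : nat) (e : rel 'I_n) : 'M[R]_n :=
  \matrix_(i, j) (e i j)%:R.

Definition invdegmx (R : realType) (n : nat) (e : rel 'I_n) : 'M[R]_n :=
  \matrix_(i, j) (if i == j then ((deg e i)%:R)^-1 else 0).

Definition rw_laplacian (R : realType) (n : nat) (e : rel 'I_n) : 'M[R]_n :=
  1%:M - invdegmx R e *m adjmx R e.

Definition vnorm2 (R : realType) (n : nat) (x : 'cV[R]_n) : R :=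
  Num.sqrt (\sum_i (x i 0) ^+ 2).

Definition spec_norm (R : realType) (m n : nat) (M : 'M[R]_(m, n)) : R :=
  sup [set vnorm2 (M *m x) / vnorm2 x | x in [set x : 'cV[R]_n | x != 0]].

(* column submatrix Phi_S (columns indexed by S, in increasing order) *)
Definition colsubset (R : realType) (m n : nat) (Phi : 'M[R]_(m, n))
  (S : {set 'I_n}) : 'M[R]_(m, #|S|) :=
  colsub (fun k : 'I_#|S| => enum_val k) Phi.

Definition norm2s (R : realType) (m n : nat) (Phi : 'M[R]_(m, n)) (s : nat) : R :=
  \big[Num.max/0]_(S : {set 'I_n} | #|S| == s) spec_norm (colsubset Phi S).

Definition sorted_eigenvalues (R : realType) (n : nat) (M : 'M[R]_n) (lam : seq R) : Prop :=
  [/\ size lam = n, sorted <=%R lam &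
      char_poly M = \prod_(x <- lam) ('X - x%:P)].

(* Main.v *)
Require Import Defs.
From mathcomp Require Import all_boot all_order all_algebra.
From mathcomp Require Import boolp classical_sets reals complex zify ring.
Import Order.TTheory GRing.Theory Num.Theory.
Local Open Scope ring_scope.
Set Implicit Arguments. Unset Strict Implicit. Unset Printing Implicit Defensive.

Section Part1.
Local Open Scope sesquilinear_scope.

Lemma char_poly_sim (F : fieldType) n (A B P : 'M[F]_n) :
  P \in unitmx -> A *m P = P *m B -> char_poly A = char_poly B.
Proof.
move=> Pu eAB.
have e : char_poly_mx A *m map_mx polyC P = map_mx polyC P *m char_poly_mx B.
  rewrite /char_poly_mx mulmxBl mulmxBr -!map_mxM eAB scalar_mxC.
  idtac.
  by [].

have := congr1 determinant e; rewrite !det_mulmx det_map_mx /= [X in X = _]mulrC.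
move/mulfI; apply; rewrite polyC_eq0 -unitfE -unitmxE //.
Qed.

Section Gen.
Variable C : numClosedFieldType.

Definition qf n (M : 'M[C]_n) (y : 'rV[C]_n) : C := (y *m M *m y^t*) 0 0.
Definition nrm n (y : 'rV[C]_n) : C := (y *m y^t*) 0 0.

Lemma herm_decomp n (M : 'M[C]_n) : M \is hermsymmx ->
  let P := spectralmx M in let d := spectral_diag M in
  [/\ P \is unitarymx, M = P^t* *m diag_mx d *m P &
     forall i, d 0 i \is Num.real].
Proof.
move=> hM P d; have Pu : P \is unitarymx by apply: spectral_unitarymx.
split => //.
  by rewrite -invmx_unitary //; apply/orthomx_spectralP/hermitian_normalmx.
by move=> i; have /mxOverP := hermitian_spectral_diag_real hM; apply.
Qed.

Lemma char_poly_herm n (M : 'M[C]_n) : M \is hermsymmx ->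
  char_poly M = \prod_(i < n) ('X - (spectral_diag M 0 i)%:P).
Proof.
move=> /herm_decomp [Pu eM _].
set P := spectralmx M in Pu eM *; set d := spectral_diag M in eM *.
rewrite (@char_poly_sim _ _ M (diag_mx d) (P ^t*)).
- by rewrite char_poly_trig ?diag_mx_is_trig //; apply: eq_bigr => i _; rewrite mxE eqxx.
- by rewrite -invmx_unitary // unitmx_inv unitarymx_unit.
- by rewrite eM -!mulmxA (unitarymxP Pu) mulmx1.
Qed.

Lemma trmxC_mul m n p (A : 'M[C]_(m, n)) (B : 'M[C]_(n, p)) :
  (A *m B)^t* = B^t* *m A^t*.
Proof. by rewrite trmx_mul map_mxM. Qed.

Lemma qf_diag n (M P : 'M[C]_n) (d : 'rV[C]_n) (y : 'rV[C]_n) :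
  P \is unitarymx -> M = P^t* *m diag_mx d *m P ->
  qf M y = \sum_i d 0 i * ((y *m P^t*) 0 i * ((y *m P^t*) 0 i)^*).
Proof.
move=> Pu eM; rewrite /qf eM.
have -> : y *m (P^t* *m diag_mx d *m P) *m y^t* =
   (y *m P^t*) *m diag_mx d *m (y *m P^t*)^t*.
  by rewrite trmxC_mul trmxCK !mulmxA.
rewrite mxE; apply: eq_bigr => i _.
rewrite mul_mx_diag !mxE.
by rewrite mulrCA mulrA.
Qed.

Lemma nrm_diag n (P : 'M[C]_n) (y : 'rV[C]_n) :
  P \is unitarymx ->
  nrm y = \sum_i ((y *m P^t*) 0 i * ((y *m P^t*) 0 i)^*).
Proof.
move=> Pu; rewrite /nrm.
have -> : y *m y^t* = (y *m P^t*) *m (y *m P^t*)^t*.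
  by rewrite trmxC_mul trmxCK mulmxA mulmxKtV.
by rewrite mxE; apply: eq_bigr => i _; rewrite !mxE.
Qed.

Lemma herm_big_eig n (M : 'M[C]_n) (z : 'rV[C]_n) (l : C) :
  M \is hermsymmx -> l \is Num.real -> z != 0 -> l * nrm z <= qf M z ->
  exists i, l <= spectral_diag M 0 i.
Proof.
move=> hM lr z0 hle; have [Pu eM dr] := herm_decomp hM.
set P := spectralmx M in Pu eM; set d := spectral_diag M in eM dr *.
case: (boolP [exists i, l <= d 0 i]) => [/existsP [i hi]|/existsPn hn].
  by exists i.
exfalso.
have hlt : forall i, d 0 i < l by move=> i; rewrite real_ltNge ?dr ?hn.
set c := z *m P^t*.
have c0 : c != 0.
  apply: contraNneq z0 => ec; rewrite -(mulmxKtV z Pu) // -/c ec mul0mx //.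
have [j cj] := rV0Pn _ c0.
move: hle; rewrite (qf_diag _ Pu eM) (nrm_diag _ Pu) mulr_sumr -subr_ge0 -sumrB.
apply/negP; rewrite lt_geF //.
rewrite (bigD1 j) //=.
apply: (@le_lt_trans _ _ (d 0 j * (c 0 j * (c 0 j)^*) - l * (c 0 j * (c 0 j)^*))).
  rewrite gerDl; apply: sumr_le0 => i _.
  rewrite -mulrBl; apply: mulr_le0_ge0; last exact: mul_conjC_ge0.
  by rewrite subr_le0 ltW.
by rewrite -mulrBl pmulr_llt0 ?mul_conjC_gt0 // subr_lt0.
Qed.

Lemma herm_support n (M : 'M[C]_n) (S : {set 'I_n}) (l : C) :
  M \is hermsymmx -> l \is Num.real ->
  (#|[set i | (spectral_diag M 0 i < l)%R]| + #|~: S| < n)%N ->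
  exists2 y : 'rV[C]_n, y != 0 &
     (forall j, j \notin S -> y 0 j = 0) /\ l * nrm y <= qf M y.
Proof.
move=> hM lr hcard; have [Pu eM dr] := herm_decomp hM.
set P := spectralmx M in Pu eM; set d := spectral_diag M in eM dr hcard *.
set I := [set i | d 0 i < l] in hcard.
pose B1 : 'M[C]_(n, #|~: S|) := \matrix_(j, a) ((j == enum_val a)%:R).
pose B2 : 'M[C]_(n, #|I|) := \matrix_(j, a) (P^t* j (enum_val a)).
pose K := kermx (row_mx B1 B2).
have K0 : K != 0.
  rewrite -mxrank_eq0 /K mxrank_ker subn_eq0 -ltnNge.
  by apply: leq_ltn_trans (rank_leq_col _) _; rewrite addnC.
have [i Ki] : exists i, row i K != 0.
  case: (boolP [exists i, row i K != 0]) => [/existsP //|/existsPn hn].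
  case/negP: K0; apply/eqP/row_matrixP => i; rewrite row0.
  by apply/eqP; move: (hn i); rewrite negbK.
set y := row i K in Ki.
have yB : y *m row_mx B1 B2 = 0 by rewrite /y -row_mul mulmx_ker row0.
move: yB; rewrite mul_mx_row => /eqP; rewrite row_mx_eq0 => /andP[/eqP y1 /eqP y2].
exists y => //; split.
  move=> j jS; have jC : j \in ~: S by rewrite inE.
  have [a ea] : exists a : 'I_#|~: S|, enum_val a = j.
    by exists (enum_rank_in jC j); rewrite enum_rankK_in.
  have := congr1 (fun A : 'rV[C]_#|~: S| => A 0 a) y1.
  rewrite !mxE (bigD1 j) //= big1 ?addr0.
    by rewrite !mxE ea eqxx mulr1.
  by move=> k kj; rewrite !mxE ea (negbTE kj) mulr0.
have c0 : forall i, i \in I -> (y *m P^t*) 0 i = 0.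
  move=> k kI; have [a ea] : exists a : 'I_#|I|, enum_val a = k.
    by exists (enum_rank_in kI k); rewrite enum_rankK_in.
  have := congr1 (fun A : 'rV[C]_#|I| => A 0 a) y2.
  by rewrite !mxE => h; apply: etrans h; apply: eq_bigr => j _; rewrite !mxE ea.
rewrite (qf_diag _ Pu eM) (nrm_diag _ Pu) mulr_sumr; apply: ler_sum => k _.
case: (boolP (k \in I)) => kI.
  by rewrite c0 // !(mul0r, mulr0).
apply: ler_wpM2r; first exact: mul_conjC_ge0.
by move: kI; rewrite inE real_ltNge ?dr // negbK.
Qed.
End Gen.

End Part1.

Section Part2.
Local Open Scope sesquilinear_scope.

Section Graph.
Variable R : realType.
Variables (n : nat) (e : rel 'I_n).
Hypothesis esym : symmetric e.
Hypothesis eirr : irreflexive e.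
Hypothesis degpos : forall i, (0 < deg e i)%N.

Definition dg i : R := (deg e i)%:R.
Definition sq i : R := Num.sqrt (dg i).

Lemma sq_gt0 i : 0 < sq i.
Proof. by rewrite sqrtr_gt0 ltr0n degpos. Qed.

Lemma sq_neq0 i : sq i != 0.
Proof. by rewrite gt_eqF ?sq_gt0. Qed.

Lemma sq_sqr i : dg i = sq i * sq i.
Proof. by rewrite -expr2 sqr_sqrtr // ler0n. Qed.

Definition Nm : 'M[R]_n := \matrix_(i, j) ((i == j)%:R - (e i j)%:R / (sq i * sq j)).

Lemma L_entry i j : rw_laplacian R e i j = (i == j)%:R - (e i j)%:R / dg i.
Proof.
rewrite /rw_laplacian !mxE (bigD1 i) //= big1 ?addr0.
  rewrite !mxE eqxx.
  by rewrite mulrC.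
by move=> k ki; rewrite !mxE eq_sym (negbTE ki) mul0r.
Qed.

Lemma LN i j : sq i * rw_laplacian R e i j = Nm i j * sq j.
Proof.
rewrite L_entry mxE sq_sqr; case: (eqVneq i j) => [->|nij].
  by rewrite eirr /= mul0r !subr0 mulr1 mul1r.
have := sq_neq0 i; have := sq_neq0 j.
case: (e i j) => /= hj hi; last by rewrite !mul0r !subr0 mulr0 mul0r.
by field; rewrite hj hi.
Qed.

Lemma Nm_sym i j : Nm i j = Nm j i.
Proof. by rewrite !mxE eq_sym (esym i j) [sq i * _]mulrC. Qed.

Lemma char_Nm : char_poly Nm = char_poly (rw_laplacian R e).
Proof.
apply: (@char_poly_sim _ _ _ _ (diag_mx (\row_i sq i))).
  by rewrite unitmxE det_diag unitfE; apply/prodf_neq0 => i _; rewrite mxE sq_neq0.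
apply/matrixP => i j; rewrite mul_mx_diag mul_diag_mx !mxE.
by have := LN i j; rewrite !mxE => ->.
Qed.

End Graph.

End Part2.

Section Part3.
Local Open Scope sesquilinear_scope.

Lemma sumS (V : nmodType) n (S : {set 'I_n}) (f : 'I_n -> V) :
  (forall k, k \notin S -> f k = 0) -> \sum_k f k = \sum_(a < #|S|) f (enum_val a).
Proof.
move=> f0; rewrite (bigID (mem S)) /= [X in _ + X]big1 ?addr0; last by move=> k /f0.
exact: big_enum_val.
Qed.

Section Restr.
Variable C : numClosedFieldType.
Variables (n : nat) (S : {set 'I_n}) (M : 'M[C]_n) (y : 'rV[C]_n).
Hypothesis yS : forall j, j \notin S -> y 0 j = 0.
Definition rz : 'rV[C]_#|S| := \row_a y 0 (enum_val a).
Definition rM : 'M[C]_#|S| := \matrix_(a, b) M (enum_val a) (enum_val b).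

Lemma qf_restr : qf rM rz = qf M y.
Proof.
rewrite /qf !mxE (sumS (S := S)); last by move=> k /yS yk; rewrite !mxE yk conjC0 mulr0.
apply: eq_bigr => a _; rewrite !mxE; congr (_ * _).
rewrite (sumS (S := S)); last by move=> k /yS yk; rewrite yk mul0r.
by apply: eq_bigr => b _; rewrite !mxE.
Qed.

Lemma nrm_restr : nrm rz = nrm y.
Proof.
rewrite /nrm !mxE (sumS (S := S)); last by move=> k /yS yk; rewrite !mxE yk mul0r.
by apply: eq_bigr => a _; rewrite !mxE.
Qed.

Lemma rz_neq0 : y != 0 -> rz != 0.
Proof.
move=> /rV0Pn [j yj]; apply/rV0Pn.
have jS : j \in S by apply: contraNT yj => /yS ->.
by exists (enum_rank_in jS j); rewrite mxE enum_rankK_in.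
Qed.
End Restr.

Section Cx.
Variable R : realType.
Local Notation C := (R[i]).
Local Notation toC := (real_complex R).

Lemma herm_real m (A : 'M[R]_m) : (forall i j, A i j = A j i) ->
  map_mx toC A \is hermsymmx.
Proof.
move=> hA; apply/is_hermitianmxP; rewrite expr0 scale1r.
apply/matrixP => i j; rewrite !mxE hA.
exact/esym/conjc_real.
Qed.

Lemma count_lt_sorted (lam : seq R) k l : sorted <=%R lam -> (k < size lam)%N ->
  l = nth 0 lam k -> (count (fun x : R => (x < l)%R) lam <= k)%N.
Proof.
move=> so ks ->; rewrite -{2}(cat_take_drop k lam) count_cat.
have -> : count (fun x : R => (x < nth 0 lam k)%R) (drop k lam) = 0%N.
  apply/eqP; rewrite -leqn0 leqNgt -has_count; apply/hasPn => x /(nthP (0:R)) [m hm <-].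
  rewrite nth_drop -leNgt; apply: (sorted_leq_nth le_trans lexx) => //.
  by rewrite inE -ltn_subRL -size_drop.
  by rewrite leq_addr.
rewrite addn0; apply: leq_trans (count_size _ _) _.
by rewrite size_take ks.
Qed.

Lemma real_eig m (A : 'M[R]_m) (z : 'rV[C]_m) (l : R) :
  (forall i j, A i j = A j i) -> z != 0 ->
  (l%:C)%C * nrm z <= qf (map_mx toC A) z ->
  exists mu : R, l <= mu /\ exists2 v : 'rV[R]_m, v != 0 & v *m A = mu *: v.
Proof.
move=> hsym z0 hle; have hA := herm_real hsym.
have lr : (l%:C)%C \is Num.real by apply/complex_realP; exists l.
have [i hi] := herm_big_eig hA lr z0 hle.
have [_ _ dr] := herm_decomp hA; move: hi dr; set d := spectral_diag _ => hi dr.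
set mu := complex.Re (d 0 i); have hd : d 0 i = (mu%:C)%C by rewrite RRe_real.
exists mu; split; first by rewrite -lecR -hd.
have : root (char_poly (map_mx toC A)) ((mu%:C)%C).
  rewrite char_poly_herm // -/d -hd; apply/rootP.
  by rewrite horner_prod (bigD1 i) //= hornerXsubC subrr mul0r.
rewrite -map_char_poly fmorph_root -eigenvalue_root_char => /eigenvalueP [v hv v0].
by exists v.
Qed.

Section Spec.
Variables (n : nat) (e : rel 'I_n).
Hypothesis esym : symmetric e.
Hypothesis eirr : irreflexive e.
Hypothesis degpos : forall i, (0 < deg e i)%N.

Lemma Nc_herm : map_mx toC (Nm R e) \is hermsymmx.
Proof. by apply: herm_real => i j; apply: Nm_sym. Qed.

Lemma card_lt_count (lam : seq R) (l : R) :
  sorted_eigenvalues (rw_laplacian R e) lam ->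
  #|[set i | spectral_diag (map_mx toC (Nm R e)) 0 i < (l%:C)%C]| =
  count (fun x => x < l) lam.
Proof.
move=> hl; set d := spectral_diag _; have [_ _ dr] := herm_decomp Nc_herm.
pose dR i := complex.Re (d 0 i).
have hd : forall i, d 0 i = ((dR i)%:C)%C by move=> i; rewrite RRe_real.
have cp : char_poly (Nm R e) = \prod_(i < n) ('X - (dR i)%:P).
  apply: (@map_poly_inj _ _ toC); rewrite map_char_poly char_poly_herm ?Nc_herm //.
  rewrite rmorph_prod; apply: eq_bigr => i _.
  by rewrite rmorphB /= map_polyX map_polyC /= -hd.
have pe : perm_eq lam [seq dR i | i <- index_enum 'I_n].
  apply: prod_XsubC_eq; rewrite big_map -cp char_Nm //; by case: hl.
rewrite (permP pe) count_map -sum1_card -sum1_count; apply: eq_bigl => i.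
by rewrite inE hd ltcR.
Qed.
End Spec.
End Cx.

End Part3.

Section Part4.
Local Open Scope classical_set_scope.

Section Norms.
Variable R : realType.

Lemma single_le_sum (I : finType) (f : I -> R) j :
  (forall i, 0 <= f i) -> f j <= \sum_i f i.
Proof. by move=> f0; rewrite (bigD1 j) //= lerDl sumr_ge0. Qed.

Lemma vnorm2_ge0 m (x : 'cV[R]_m) : 0 <= vnorm2 x.
Proof. exact: sqrtr_ge0. Qed.

Lemma coord_le m (x : 'cV[R]_m) j : `|x j 0| <= vnorm2 x.
Proof.
rewrite /vnorm2 -sqrtr_sqr ler_sqrt; last by apply: sumr_ge0 => i _; apply: sqr_ge0.
have h := @single_le_sum _ (fun i => x i 0 ^+ 2) j.
exact: (h (fun i => sqr_ge0 _)).
Qed.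

Lemma vnorm2_le_l1 m (w : 'cV[R]_m) : vnorm2 w <= \sum_i `|w i 0|.
Proof.
have T0 : 0 <= \sum_i `|w i 0| by apply: sumr_ge0.
rewrite /vnorm2 -(ger0_norm T0) -sqrtr_sqr ler_sqrt ?sqr_ge0 //.
rewrite expr2 mulr_suml; apply: ler_sum => i _.
rewrite -real_normK ?num_real // expr2 ler_wpM2l //.
have h := @single_le_sum _ (fun i => `|w i 0|) i.
exact: (h (fun i => normr_ge0 _)).
Qed.

Lemma vnorm2_mul_le m k (M : 'M[R]_(m, k)) (x : 'cV[R]_k) :
  vnorm2 (M *m x) <= (\sum_i \sum_j `|M i j|) * vnorm2 x.
Proof.
apply: le_trans (vnorm2_le_l1 _) _; rewrite mulr_suml; apply: ler_sum => i _.
rewrite mxE mulr_suml; apply: le_trans (ler_norm_sum _ _ _) _.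
apply: ler_sum => j _; rewrite normrM ler_wpM2l ?coord_le //.
Qed.

Lemma spec_norm_ge m k (M : 'M[R]_(m, k)) (x : 'cV[R]_k) :
  x != 0 -> vnorm2 (M *m x) / vnorm2 x <= spec_norm M.
Proof.
move=> x0; apply: sup_upper_bound; last by exists x.
split; first by exists (vnorm2 (M *m x) / vnorm2 x), x.
exists (\sum_i \sum_j `|M i j|) => _ [y _ <-].
have K0 : 0 <= \sum_i \sum_j `|M i j| by do 2!apply: sumr_ge0 => ? _.
have [->|yn] := eqVneq (vnorm2 y) 0; first by rewrite invr0 mulr0.
have yp : 0 < vnorm2 y by rewrite lt_def yn vnorm2_ge0.
by rewrite ler_pdivrMr // vnorm2_mul_le.
Qed.

Lemma norm2s_ge m k (M : 'M[R]_(m, k)) (S : {set 'I_k}) s :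
  #|S| = s -> spec_norm (colsubset M S) <= norm2s M s.
Proof. by move=> hS; rewrite /norm2s; apply: le_bigmax_cond; rewrite hS. Qed.

End Norms.

End Part4.

Section Part5.

Section Final.
Variable R : realType.
Variables (n : nat) (e : rel 'I_n).
Hypothesis esym : symmetric e.
Hypothesis eirr : irreflexive e.
Hypothesis degpos : forall i, (0 < deg e i)%N.

Lemma lap_eig (S : {set 'I_n}) (mu : R) (v : 'rV[R]_#|S|) :
  v != 0 -> v *m (\matrix_(a, b) Nm R e (enum_val a) (enum_val b)) = mu *: v ->
  `|mu| <= spec_norm (colsubset (rw_laplacian R e) S).
Proof.
move=> v0 hv; set L := rw_laplacian R e.
pose x : 'cV[R]_#|S| := \col_b (v 0 b / sq R e (enum_val b)).
have [b vb] := rV0Pn _ v0.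
have xb : x b 0 != 0.
  by rewrite mxE mulf_eq0 invr_eq0 negb_or vb (sq_neq0 R degpos).
have x0 : x != 0 by apply: contraNneq xb => ->; rewrite mxE.
have key : forall a, (colsubset L S *m x) (enum_val a) 0 = mu * x a 0.
  move=> a; rewrite !mxE.
  have -> : mu * (v 0 a / sq R e (enum_val a)) =
            (v *m (\matrix_(a, b) Nm R e (enum_val a) (enum_val b))) 0 a /
              sq R e (enum_val a).
    by rewrite hv !mxE mulrA.
  rewrite mxE mulr_suml; apply: eq_bigr => c _.
  rewrite [in RHS]mxE [x c 0]mxE /colsubset [colsub _ _ _ _]mxE (Nm_sym R esym).
  have := LN R eirr degpos (enum_val a) (enum_val c).
  have := sq_neq0 R degpos (enum_val a); have := sq_neq0 R degpos (enum_val c).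
  rewrite /L; move: (rw_laplacian R e _ _) (Nm R e _ _) (sq R e _) (sq R e _).
  move=> l0 n0 sa sc hc ha h.
  have -> : l0 = n0 * sc / sa by rewrite -h [sa * l0]mulrC mulfK.
  by field; rewrite ha hc.
have xp : 0 < vnorm2 x.
  rewrite sqrtr_gt0; apply: (@lt_le_trans _ _ (x b 0 ^+ 2)).
    by rewrite lt_def sqrf_eq0 xb sqr_ge0.
  have h := @single_le_sum _ _ (fun i => x i 0 ^+ 2) b.
  exact: (h (fun i => sqr_ge0 _)).
apply: le_trans (spec_norm_ge _ x0); rewrite ler_pdivlMr //.
rewrite /vnorm2 -sqrtr_sqr -sqrtrM ?sqr_ge0 // ler_sqrt; last first.
  by apply: sumr_ge0 => i _; apply: sqr_ge0.
rewrite mulr_sumr.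
have -> : \sum_(i < #|S|) mu ^+ 2 * x i 0 ^+ 2 =
          \sum_(a < #|S|) (colsubset L S *m x) (enum_val a) 0 ^+ 2.
  by apply: eq_bigr => a _; rewrite key exprMn.
rewrite [X in _ <= X](bigID (mem S)) /=.
rewrite [\sum_(i in S) _]big_enum_val lerDl.
by apply: sumr_ge0 => i _; apply: sqr_ge0.
Qed.
End Final.

Lemma degpos_of (R0 : realType) n0 (e0 : rel 'I_n0) : connected_graph e0 -> (1 < n0)%N ->
  forall i, (0 < deg e0 i)%N.
Proof.
move=> hcon n2 i.
have [j ji] : exists j : 'I_n0, j != i.
  have h0 : (0 < n0)%N by apply: leq_trans n2.
  case: (eqVneq (Ordinal h0) i) => [e0i|]; last by exists (Ordinal h0).
  by exists (Ordinal n2); rewrite -e0i; apply/eqP => /(congr1 val).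
have /connectP [p pth lst] := hcon i j.
case: p pth lst => [/= _ ji'|a p /= /andP [eia _] _].
  by rewrite ji' eqxx in ji.
by apply/card_gt0P; exists a; rewrite inE.
Qed.

End Part5.

Unset Implicit Arguments.
Theorem mainTheorem7 (R : realType) (n0 : nat) (e : rel 'I_n0) (lam : seq R) (s : nat) :
  simple_graph e -> connected_graph e ->
  sorted_eigenvalues (rw_laplacian R e) lam ->
  (2 <= s <= n0)%N ->
  nth 0 lam (s - 2) <= norm2s (rw_laplacian R e) s.
Proof.
move=> [esym eirr] hcon hsort /andP [s2 sn].
have degpos := degpos_of R hcon (leq_trans s2 sn).
set l := nth 0 lam (s - 2).
have [S hS] : exists S : {set 'I_n0}, #|S| = s.
  exists [set widen_ord sn i | i : 'I_s]; rewrite card_imset ?card_ord //.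
  move=> a b /(congr1 val) /= ab; exact: val_inj.
set Nc := map_mx (real_complex R) (Nm R e).
have hI : (#|[set i | (spectral_diag Nc 0 i < (l%:C)%C)%R]| + #|~: S| < n0)%N.
  rewrite (card_lt_count esym eirr degpos _ hsort).
  have hc : (count (fun x : R => (x < l)%R) lam <= s - 2)%N.
    case: hsort => hsz hso _; apply: count_lt_sorted => //; rewrite hsz; lia.
  apply: leq_ltn_trans (leq_add hc (leqnn _)) _.
  have := cardsC S; rewrite card_ord hS; lia.
have lr : (l%:C)%C \is Num.real by apply/complex_realP; exists l.
have [y y0 [yS hy]] := herm_support (Nc_herm R esym) lr hI.
pose A : 'M[R]_#|S| := \matrix_(a, b) Nm R e (enum_val a) (enum_val b).
have eA : map_mx (real_complex R) A = rM S Nc by apply/matrixP => a b; rewrite !mxE.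
have Asym : forall a b, A a b = A b a by move=> a b; rewrite [A a b]mxE [A b a]mxE (Nm_sym R esym).
have hle : (l%:C)%C * nrm (rz S y) <= qf (map_mx (real_complex R) A) (rz S y).
  by rewrite eA qf_restr // nrm_restr.
have [mu [lmu [v v0 hv]]] := real_eig Asym (rz_neq0 yS y0) hle.
apply: (le_trans lmu); apply: le_trans (ler_norm mu) _.
apply: le_trans (lap_eig esym eirr degpos v0 hv) _.
exact: norm2s_ge.
Qed.
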